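(* Let $\tilde{\bm C}_n,\tilde{\bm C}_{n+1}$ be symmetric positive-definite tensors, $\Delta t_n>0$, and $\bm\Gamma^1_n,\dots,\bm\Gamma^m_n$ symmetric tensors. For $\alpha=1,\dots,m$ define $$\bm\Gamma^\alpha_{n+1}:=\frac{\Delta t_n}{\eta^\alpha+\mu^\alpha\Delta t_n/2}\left(\frac{\tilde{\bm S}^\alpha_{\mathrm{iso}}(\tilde{\bm C}_{n+1})+\tilde{\bm S}^\alpha_{\mathrm{iso}}(\tilde{\bm C}_{n})}{2}-\hat{\bm S}^\alpha_0-\Big(\frac{\mu^\alpha}{2}-\frac{\eta^\alpha}{\Delta t_n}\Big)\bm\Gamma^\alpha_n+\mu^\alpha\bm I\right)$$ and $\bm\Gamma^\alpha_{n+\frac12}:=\frac12(\bm\Gamma^\alpha_n+\bm\Gamma^\alpha_{n+1})$. Then $$G_{\mathrm{iso}}(\tilde{\bm C}_{n+1},\bm\Gamma^1_{n+1},\dots,\bm\Gamma^m_{n+1})-G_{\mathrm{iso}}(\tilde{\bm C}_{n+1},\bm\Gamma^1_{n+\frac12},\dots,\bm\Gamma^m_{n+\frac12})+G_{\mathrm{iso}}(\tilde{\bm C}_{n},\bm\Gamma^1_{n+\frac12},\dots,\bm\Gamma^m_{n+\frac12})-G_{\mathrm{iso}}(\tilde{\bm C}_{n},\bm\Gamma^1_{n},\dots,\bm\Gamma^m_{n})=-\frac12\Delta t_n\sum_{\alpha=1}^m\eta^\alpha\left|\frac{\bm\Gamma^\alpha_{n+1}-\bm\Gamma^\alpha_n}{\Delta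 t_n}\right|^2.$$
   Context: $|\bm A|=(\bm A:\bm A)^{1/2}$; $\bm I$ the identity tensor. Fix $m\ge1$; for each $\alpha$: $\mu^\alpha>0$, $\eta^\alpha>0$, constant symmetric tensor $\hat{\bm S}^\alpha_0$, smooth scalar function $G^\alpha$ on symmetric positive-definite tensors with $\tilde{\bm S}^\alpha_{\mathrm{iso}}(\tilde{\bm C}):=2\partial G^\alpha/\partial\tilde{\bm C}$; $G^\infty_{\mathrm{iso}}$ a smooth scalar function. $\Upsilon^\alpha(\tilde{\bm C},\bm\Gamma):=\frac{1}{4\mu^\alpha}|\tilde{\bm S}^\alpha_{\mathrm{iso}}(\tilde{\bm C})-\hat{\bm S}^\alpha_0-\mu^\alpha(\bm\Gamma-\bm I)|^2$ and $G_{\mathrm{iso}}(\tilde{\bm C},\bm\Gamma^1,\dots,\bm\Gamma^m):=G^\infty_{\mathrm{iso}}(\tilde{\bm C})+\sum_{\alpha=1}^m\Upsilon^\alpha(\tilde{\bm C},\bm\Gamma^\alpha)$. *)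

(* Defs.v *)
From HB Require Import structures.
From mathcomp Require Import all_boot all_order all_algebra.
From mathcomp Require Import all_classical all_reals all_analysis.
Set Implicit Arguments. Unset Strict Implicit. Unset Printing Implicit Defensive.
Import Order.TTheory GRing.Theory Num.Theory.
Import numFieldNormedType.Exports.
Local Open Scope ring_scope.

Section Defs.
Variable R : realType.

Definition tensor := 'M[R]_3.

Definition ddot (A B : tensor) : R := \sum_(i < 3) \sum_(j < 3) A i j * B i j.

Definition tnorm (A : tensor) : R := Num.sqrt (ddot A A).

Definition sym_tensor (A : tensor) : Prop := A^T = A.

Definition spd (A : tensor) : Prop :=
  sym_tensor A /\ forall v : 'rV[R]_3, v != 0 -> 0 < (v *m A *m v^T) 0 0.

(* partial derivative dG/dC as the tensor of componentwise partial derivatives *)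
Definition dG (G : tensor -> R) (C : tensor) : tensor :=
  \matrix_(i < 3, j < 3) ('D_(delta_mx i j) G C).

Definition Siso (G : tensor -> R) (C : tensor) : tensor := 2%:R *: dG G C.

Definition Upsilon (G : tensor -> R) (S0 : tensor) (mu : R) (C Gam : tensor) : R :=
  (4%:R * mu)^-1 * tnorm (Siso G C - S0 - mu *: (Gam - 1%:M)) ^+ 2.

Definition Giso (m : nat) (Ginf : tensor -> R) (G : 'I_m -> tensor -> R)
  (S0 : 'I_m -> tensor) (mu : 'I_m -> R) (C : tensor) (Gam : 'I_m -> tensor) : R :=
  Ginf C + \sum_(a < m) Upsilon (G a) (S0 a) (mu a) C (Gam a).

Definition Gamma_next (G : tensor -> R) (S0 : tensor) (mu eta dt : R)
  (Cn Cn1 Gn : tensor) : tensor :=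
  (dt / (eta + mu * dt / 2%:R)) *:
    ((2%:R)^-1 *: (Siso G Cn1 + Siso G Cn) - S0
     - (mu / 2%:R - eta / dt) *: Gn + mu *: 1%:M).

End Defs.

(* Main.v *)
Require Import Defs.
From HB Require Import structures.
From mathcomp Require Import all_boot all_order all_algebra.
From mathcomp Require Import all_classical all_reals all_analysis.
From mathcomp Require Import ring lra.
Import Order.TTheory GRing.Theory Num.Theory.
Import numFieldNormedType.Exports.
Local Open Scope ring_scope.

Lemma tnorm_sq (R : realType) (A : tensor R) : tnorm A ^+ 2 = ddot A A.
Proof.
rewrite /tnorm sqr_sqrtr // /ddot; apply: sumr_ge0 => i _; apply: sumr_ge0 => j _.
by rewrite -expr2 sqr_ge0.
Qed.

Lemma ddot_ge0 (R : realType) (A : tensor R) : 0 <= ddot A A.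
Proof.
rewrite /ddot; apply: sumr_ge0 => i _; apply: sumr_ge0 => j _.
by rewrite -expr2 sqr_ge0.
Qed.

Lemma Ups_ddot (R : realType) (G : tensor R -> R) (S0 : tensor R) (mu : R) (C Gam : tensor R) :
  Upsilon G S0 mu C Gam = (4%:R * mu)^-1 * ddot (Siso G C - S0 - mu *: (Gam - 1%:M)) (Siso G C - S0 - mu *: (Gam - 1%:M)).
Proof. by rewrite /Upsilon tnorm_sq. Qed.

Lemma key (R : realType) (G : tensor R -> R) (S0 : tensor R) (mu eta dt : R) (Cn Cn1 Gn : tensor R) :
  0 < mu -> 0 < eta -> 0 < dt ->
  let G1 := Gamma_next G S0 mu eta dt Cn Cn1 Gn in
  let Gh := (2%:R)^-1 *: (Gn + G1) in
  Upsilon G S0 mu Cn1 G1 - Upsilon G S0 mu Cn1 Gh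
  + Upsilon G S0 mu Cn Gh - Upsilon G S0 mu Cn Gn
  = - (2%:R)^-1 * dt * (eta * tnorm (dt^-1 *: (G1 - Gn)) ^+ 2).
Proof.
move=> hmu heta hdt G1 Gh.
rewrite !Ups_ddot tnorm_sq.
rewrite /Gh /G1 /Gamma_next.
move: (Siso G Cn1) (Siso G Cn) => A B.
have hden : eta + mu * dt / 2%:R != 0.
  by rewrite gt_eqF // addr_gt0 // divr_gt0 // mulr_gt0.
rewrite /ddot !mulr_sumr -?sumrB -?big_split -?sumrB -?big_split -?sumrB /=.
apply: eq_bigr => i _.
rewrite !mulr_sumr -?sumrB -?big_split -?sumrB -?big_split -?sumrB /=.
apply: eq_bigr => j _.
rewrite !mxE.
move: ((i == j)%:R : R) => e.
field.
by rewrite !gt_eqF // ?addr_gt0 ?mulr_gt0.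
Qed.

Lemma sum4 (R : realType) (m : nat) (x y : R) (f1 f2 f3 f4 : 'I_m -> R) :
  x + \sum_(a < m) f1 a - (x + \sum_(a < m) f2 a) + (y + \sum_(a < m) f3 a) - (y + \sum_(a < m) f4 a)
  = \sum_(a < m) (f1 a - f2 a + f3 a - f4 a).
Proof.
rewrite sumrB big_split sumrB /=.
move: (\sum_(a < m) f1 a) (\sum_(a < m) f2 a) (\sum_(a < m) f3 a) (\sum_(a < m) f4 a) => s1 s2 s3 s4.
ring.
Qed.

Theorem lemma4 (R : realType) (m : nat) (hm : (0 < m)%N)
  (mu eta : 'I_m -> R) (S0 : 'I_m -> 'M[R]_3)
  (G : 'I_m -> 'M[R]_3 -> R) (Ginf : 'M[R]_3 -> R)
  (hmu : forall a, 0 < mu a) (heta : forall a, 0 < eta a)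
  (hS0 : forall a, sym_tensor (S0 a))
  (hG : forall a C, spd C -> differentiable (G a) C)
  (hGinf : forall C, spd C -> differentiable Ginf C)
  (Cn Cn1 : 'M[R]_3) (dt : R) (Gn : 'I_m -> 'M[R]_3)
  (hCn : spd Cn) (hCn1 : spd Cn1) (hdt : 0 < dt)
  (hGn : forall a, sym_tensor (Gn a)) :
  let Gn1 := fun a => Gamma_next (G a) (S0 a) (mu a) (eta a) dt Cn Cn1 (Gn a) in
  let Gnh := fun a => (2%:R)^-1 *: (Gn a + Gn1 a) in
  Giso Ginf G S0 mu Cn1 Gn1 - Giso Ginf G S0 mu Cn1 Gnh
  + Giso Ginf G S0 mu Cn Gnh - Giso Ginf G S0 mu Cn Gn
  = - (2%:R)^-1 * dt * \sum_(a < m) eta a * tnorm (dt^-1 *: (Gn1 a - Gn a)) ^+ 2.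
Proof.
move=> Gn1 Gnh.
rewrite /Giso.
transitivity (\sum_(a < m)
  (Upsilon (G a) (S0 a) (mu a) Cn1 (Gn1 a) - Upsilon (G a) (S0 a) (mu a) Cn1 (Gnh a)
 + Upsilon (G a) (S0 a) (mu a) Cn (Gnh a) - Upsilon (G a) (S0 a) (mu a) Cn (Gn a))).
  exact (sum4 _ _ (Ginf Cn1) (Ginf Cn) (fun a => Upsilon (G a) (S0 a) (mu a) Cn1 (Gn1 a))
    (fun a => Upsilon (G a) (S0 a) (mu a) Cn1 (Gnh a))
    (fun a => Upsilon (G a) (S0 a) (mu a) Cn (Gnh a))
    (fun a => Upsilon (G a) (S0 a) (mu a) Cn (Gn a))).
rewrite mulr_sumr; apply: eq_bigr => a _.
exact (key _ (G a) (S0 a) (mu a) (eta a) dt Cn Cn1 (Gn a) (hmu a) (heta a) hdt).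
Qed.
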